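(* Let $N\geq 3$ be an odd integer. For real $\theta$ and $\varepsilon\geq 0$ let $G_\theta(\varepsilon)=(1+\theta)^N+\big(1-\theta(1+\varepsilon)\big)^N-2$ and $\varepsilon_c(\theta)=\inf\{\varepsilon>0: G_\theta(\varepsilon)\leq 0\}$ (with $\inf\emptyset=+\infty$). For positive $\theta\neq 2^{1/N}-1$ define $$f(\theta)=\big(2-(1+\theta)^N\big)^{1/N}-1+\theta(1+\theta)^{N-1}\big(2-(1+\theta)^N\big)^{\frac1N-1}.$$ Then on the interval $\theta>2^{1/N}-1$ the function $\varepsilon_c$ is differentiable with derivative $$\varepsilon_c'(\theta)=\frac{f(\theta)}{\theta^2},$$ and $\varepsilon_c$ has a unique stationary point in this interval, at which it attains its maximum value over the interval $\theta>2^{1/N}-1$ (being increasing before this point and decreasing after it).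
   Context: Root convention: for real $X>0$, $X^{1/N}$ is the positive real $N$-th root; for $X<0$ and $N$ odd, $X^{1/N}=-|X|^{1/N}$; and for an integer $m$, $X^{1/N-m}$ is defined as $Y^{1/N}$ with $Y=X^{1-mN}$, evaluated by the same convention. For $\theta>2^{1/N}-1$ one has $2-(1+\theta)^N<0$, so these conventions are in force; in this range $\varepsilon_c(\theta)=\frac{1-(2-(1+\theta)^N)^{1/N}}{\theta}-1$. *)

(* Defs.v *)
From HB Require Import structures.
From mathcomp Require Import all_boot all_order all_algebra.
From mathcomp Require Import all_classical all_reals all_analysis.
Set Implicit Arguments. Unset Strict Implicit. Unset Printing Implicit Defensive.
Import Order.TTheory GRing.Theory Num.Theory.
Import numFieldNormedType.Exports.
Local Open Scope classical_set_scope.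
Local Open Scope ring_scope.

(* Real N-th root with the paper's convention: positive root for x >= 0,
   and -|x|^{1/N} for x < 0 (meaningful for N odd). *)
Definition oddroot {R : realType} (N : nat) (x : R) : R :=
  if 0 <= x then x `^ (N%:R^-1) else - ((- x) `^ (N%:R^-1)).

(* X^{1/N - 1} := Y^{1/N} with Y = X^{1-N} (convention with m = 1). *)
Definition oddroot_m1 {R : realType} (N : nat) (x : R) : R :=
  oddroot N (x ^- N.-1).

Definition Gth {R : realType} (N : nat) (theta eps : R) : R :=
  (1 + theta) ^+ N + (1 - theta * (1 + eps)) ^+ N - 2.

Definition eps_c {R : realType} (N : nat) (theta : R) : \bar R :=
  ereal_inf [set (e%:E)%E | e in [set e : R | 0 < e /\ Gth N theta e <= 0]].

Definition fth {R : realType} (N : nat) (theta : R) : R :=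
  oddroot N (2 - (1 + theta) ^+ N) - 1
  + theta * (1 + theta) ^+ N.-1 * oddroot_m1 N (2 - (1 + theta) ^+ N).

Definition theta0 {R : realType} (N : nat) : R := (2 : R) `^ (N%:R^-1) - 1.

(* Main.v *)
Require Import Defs.
From HB Require Import structures.
From mathcomp Require Import all_boot all_order all_algebra.
From mathcomp Require Import all_classical all_reals all_analysis.
From mathcomp Require Import ring lra.
Import Order.TTheory GRing.Theory Num.Theory.
Import numFieldNormedType.Exports.
Local Open Scope classical_set_scope.
Local Open Scope ring_scope.
Set Implicit Arguments. Unset Strict Implicit.

Lemma powK (R : realType) (N : nat) (x : R) : (0 < N)%N -> 0 <= x ->
  (x `^ N%:R^-1) ^+ N = x.
Proof.
move=> N0 x0; rewrite -powR_mulrn ?powR_ge0 // -powRrM mulVf ?powRr1 //.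
by rewrite pnatr_eq0 -lt0n.
Qed.

Lemma powK2 (R : realType) (N : nat) (y : R) : (0 < N)%N -> 0 <= y ->
  (y ^+ N) `^ N%:R^-1 = y.
Proof.
move=> N0 y0; rewrite -powR_mulrn // -powRrM mulfV ?powRr1 //.
by rewrite pnatr_eq0 -lt0n.
Qed.

Lemma oddX_lt (R : realType) (N : nat) (x y : R) : odd N -> x < y -> x ^+ N < y ^+ N.
Proof.
move=> oN xy; have N0 : (0 < N)%N by case: N oN.
have oX : forall z : R, (- z) ^+ N = - z ^+ N.
  by move=> z; rewrite exprNn -signr_odd oN expr1 mulN1r.
have [x0|x0] := leP 0 x.
  by rewrite ltr_pXn2r // nnegrE // (le_trans x0) // ltW.
have [y0|y0] := leP y 0.
  have := @ltr_pXn2r R N N0 (- y) (- x); rewrite !nnegrE !oppr_ge0 !oX ltrN2.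
  by move=> /(_ y0 (ltW x0)) ->; rewrite ltrN2.
apply: (@lt_trans _ _ 0).
  by rewrite real_exprn_odd_lt0 // ?num_real.
by rewrite real_exprn_odd_gt0 // ?num_real.
Qed.

Lemma oddX_le (R : realType) (N : nat) (x y : R) : odd N -> (x ^+ N <= y ^+ N) = (x <= y).
Proof.
move=> oN; apply/idP/idP.
  by apply: contraTT; rewrite -!ltNge; exact: oddX_lt.
rewrite le_eqVlt => /orP[/eqP->//|/(oddX_lt oN)/ltW//].
Qed.

Definition sfun (R : realType) (N : nat) (t : R) := ((1 + t) ^+ N - 2) `^ (N%:R^-1).
Definition Ef (R : realType) (N : nat) (t : R) := (1 + sfun N t) / t - 1.
Definition gfun (R : realType) (N : nat) (t : R) := 2 - (1 + t) ^+ N.-1 - sfun N t ^+ N.-1.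

Lemma theta_facts (R : realType) (N : nat) (t : R) : (3 <= N)%N -> theta0 N < t ->
  0 < t /\ 0 < (1 + t) ^+ N - 2.
Proof.
move=> N3 ht; have N0 : (0 < N)%N by apply: leq_trans N3.
set p : R := 2 `^ N%:R^-1.
have p0 : 0 <= p by exact: powR_ge0.
have pN : p ^+ N = 2 by rewrite powK.
have p1 : 1 < p.
  by rewrite -(ltr_pXn2r N0) ?nnegrE // expr1n pN ltr1n.
have up : p < 1 + t by move: ht; rewrite /theta0 -/p; lra.
split; first lra.
by rewrite subr_gt0 -pN ltr_pXn2r // nnegrE; lra.
Qed.

Lemma sfun_facts (R : realType) (N : nat) (t : R) : (3 <= N)%N -> theta0 N < t ->
  0 < sfun N t /\ sfun N t ^+ N = (1 + t) ^+ N - 2.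
Proof.
move=> N3 ht; have N0 : (0 < N)%N by apply: leq_trans N3.
have [t0 X0] := theta_facts N3 ht.
by split; [exact: powR_gt0 | rewrite powK // ltW].
Qed.

Lemma bin_aux (R : realType) (a : R) n : 0 <= a -> 2 <= (a + 2) ^+ n.+1 - a ^+ n.+1.
Proof.
move=> a0; elim: n => [|n IH]; first by rewrite !expr1; lra.
rewrite (exprS (a + 2)) (exprS a).
have Y0 : 0 <= a ^+ n.+1 by rewrite exprn_ge0.
move: IH Y0; set X := (a + 2) ^+ n.+1; set Y := a ^+ n.+1 => IH Y0.
have h1 : 0 <= a * (X - Y - 2) by apply: mulr_ge0; lra.
nra.
Qed.

Lemma bin_aux2 (R : realType) (a : R) N : 0 <= a -> (2 <= N)%N -> 2 < (a + 2) ^+ N - a ^+ N.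
Proof.
move=> a0; case: N => [//|[//|n]] _.
rewrite (exprS (a + 2) n.+1) (exprS a n.+1); have := bin_aux n a0.
have Y0 : 0 <= a ^+ n.+1 by rewrite exprn_ge0.
move: Y0; set X := (a + 2) ^+ n.+1; set Y := a ^+ n.+1 => Y0 IH.
have h1 : 0 <= a * (X - Y - 2) by apply: mulr_ge0; lra.
nra.
Qed.

Lemma Ef_gt0 (R : realType) (N : nat) (t : R) : (3 <= N)%N -> theta0 N < t ->
  0 < Ef N t.
Proof.
move=> N3 ht; have [t0 X0] := theta_facts N3 ht.
have [s0 sN] := sfun_facts N3 ht.
have N0 : (0 < N)%N by apply: leq_trans N3.
suff : t < 1 + sfun N t.
  by move=> h; rewrite /Ef subr_gt0 ltr_pdivlMr // mul1r.
have [t1|t1] := leP t 1; first lra.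
have a0 : 0 <= t - 1 by lra.
have := bin_aux2 a0 (ltnW N3).
rewrite (_ : t - 1 + 2 = 1 + t); last lra.
move=> h.
have : (t - 1) ^+ N < sfun N t ^+ N by rewrite sN; lra.
rewrite ltr_pXn2r ?nnegrE ?(ltW s0) //; lra.
Qed.

Lemma Gth_iff (R : realType) (N : nat) (t e : R) : (3 <= N)%N -> odd N -> theta0 N < t ->
  (Gth N t e <= 0) = (Ef N t <= e).
Proof.
move=> N3 oN ht; have [t0 X0] := theta_facts N3 ht.
have [s0 sN] := sfun_facts N3 ht.
have oX : forall z : R, (- z) ^+ N = - z ^+ N.
  by move=> z; rewrite exprNn -signr_odd oN expr1 mulN1r.
rewrite /Gth (_ : ((1 + t) ^+ N + (1 - t * (1 + e)) ^+ N - 2 <= 0) =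
   ((1 - t * (1 + e)) ^+ N <= (- sfun N t) ^+ N)); last first.
  by rewrite oX sN; apply/idP/idP; lra.
rewrite oddX_le //.
have hE : (Ef N t + 1) * t = 1 + sfun N t.
  by rewrite /Ef; field; rewrite gt_eqF.
apply/idP/idP => h.
  have : 0 <= t * (e - Ef N t) by nra.
  by rewrite pmulr_rge0 // subr_ge0.
have : 0 <= t * (e - Ef N t) by apply: mulr_ge0; lra.
nra.
Qed.

Lemma eps_c_val (R : realType) (N : nat) (t : R) : (3 <= N)%N -> odd N -> theta0 N < t ->
  eps_c N t = (Ef N t)%:E.
Proof.
move=> N3 oN ht; have E0 := Ef_gt0 N3 ht.
rewrite /eps_c; apply/eqP; rewrite eq_le; apply/andP; split.
  apply: ereal_inf_lbound; exists (Ef N t) => //; split => //.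
  by rewrite Gth_iff.
apply: le_ereal_inf_tmp => _ [e [e0 He] <-].
by rewrite lee_fin -Gth_iff.
Qed.

Lemma fth_eq (R : realType) (N : nat) (t : R) : (3 <= N)%N -> odd N -> theta0 N < t ->
  fth N t = - sfun N t - 1 + t * (1 + t) ^+ N.-1 / sfun N t ^+ N.-1.
Proof.
move=> N3 oN ht; have [t0 X0] := theta_facts N3 ht.
have [s0 sN] := sfun_facts N3 ht.
have N0 : (0 < N)%N by apply: leq_trans N3.
have eN1 : ~~ odd N.-1 by case: N oN N0 {N3 ht sN s0 X0} => //= n; rewrite negbK.
have A0 : ~~ (0 <= 2 - (1 + t) ^+ N) by rewrite -ltNge; lra.
rewrite /fth /oddroot_m1 /oddroot (negbTE A0) opprB -/(sfun N t).
have -> : (2 - (1 + t) ^+ N) ^- N.-1 = ((sfun N t ^+ N.-1)^-1) ^+ N.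
  rewrite -opprB -sN exprNn -signr_odd (negbTE eN1) expr0 mul1r.
  by rewrite exprVn -!exprM mulnC.
by rewrite exprn_ge0 ?invr_ge0 ?exprn_ge0 ?(ltW s0) // powK2 // ?invr_ge0 ?exprn_ge0 ?(ltW s0) //.
Qed.

Lemma fth_g (R : realType) (N : nat) (t : R) : (3 <= N)%N -> odd N -> theta0 N < t ->
  fth N t = gfun N t / sfun N t ^+ N.-1.
Proof.
move=> N3 oN ht; have [t0 X0] := theta_facts N3 ht.
have [s0 sN] := sfun_facts N3 ht.
rewrite fth_eq // /gfun.
have sN1 : sfun N t ^+ N.-1 != 0 by rewrite expf_neq0 // gt_eqF.
have N0 : (0 < N)%N by apply: leq_trans N3.
have e1 : sfun N t ^+ N = sfun N t * sfun N t ^+ N.-1 by rewrite -exprS prednK.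
have e2 : (1 + t) ^+ N = (1 + t) * (1 + t) ^+ N.-1 by rewrite -exprS prednK.
move: sN; rewrite e1 e2 => sN.
apply: (@mulIf _ (sfun N t ^+ N.-1)) => //.
rewrite mulfVK //.
have -> : (- sfun N t - 1 + t * (1 + t) ^+ N.-1 / sfun N t ^+ N.-1) * sfun N t ^+ N.-1
  = - (sfun N t * sfun N t ^+ N.-1) - sfun N t ^+ N.-1 + t * (1 + t) ^+ N.-1.
  by field.
rewrite sN; ring.
Qed.

Lemma Xfun_derive (R : realType) (N : nat) (t : R) :
  is_derive t 1 (fun y : R => (1 + y) ^+ N - 2) (N%:R * (1 + t) ^+ N.-1).
Proof.
have h1 : is_derive t 1 (fun y : R => 1 + y) 1.
  by apply: is_derive_eq; rewrite add0r mulr1.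
have h2 := is_deriveX N h1.
have h3 := is_deriveB h2 (is_derive_cst (2 : R^o) t 1).
match type of h3 with is_derive _ _ ?f _ => have -> : (fun y : R => (1 + y) ^+ N - 2) = f end.
  apply/funext => y /=. by rewrite !fctE.
apply: (is_derive_eq h3).
by rewrite subr0 /GRing.scale /= mulr1.
Qed.

Lemma sfun_derive (R : realType) (N : nat) (t : R) : (3 <= N)%N -> theta0 N < t ->
  is_derive t 1 (sfun N) ((1 + t) ^+ N.-1 / sfun N t ^+ N.-1).
Proof.
move=> N3 ht; have [t0 X0] := theta_facts N3 ht.
have [s0 sN] := sfun_facts N3 ht.
have N0 : (0 < N)%N by apply: leq_trans N3.
have hp := @is_derive1_powR R (N%:R^-1) _ X0.
have h := @is_derive1_comp R _ (fun y : R => (1 + y) ^+ N - 2) t _ _ hp (Xfun_derive N t).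
apply: (is_derive_eq h).
rewrite powRB; last by rewrite (gt_eqF X0) implybT.
rewrite powRr1 ?ltW // -/(sfun N t) -sN.
have e1 : sfun N t ^+ N = sfun N t * sfun N t ^+ N.-1 by rewrite -exprS prednK.
rewrite e1; field.
by rewrite pnatr_eq0 -lt0n N0 expf_neq0 ?gt_eqF.
Qed.

Lemma Ef_derive (R : realType) (N : nat) (t : R) : (3 <= N)%N -> odd N -> theta0 N < t ->
  is_derive t 1 (Ef N) (fth N t / t ^+ 2).
Proof.
move=> N3 oN ht; have [t0 X0] := theta_facts N3 ht.
have [s0 sN] := sfun_facts N3 ht.
have hs := sfun_derive N3 ht.
have h1 := is_deriveD (is_derive_cst (1 : R^o) t 1) hs.
have hi : is_derive t 1 (fun y : R => y^-1) (- t ^- 2 *: 1).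
  apply: is_deriveV; first by rewrite gt_eqF.
have h2 := is_deriveM h1 hi.
have h3 := is_deriveB h2 (is_derive_cst (1 : R^o) t 1).
match type of h3 with is_derive _ _ ?f _ => have -> : Ef N = f end.
  by apply/funext => y /=; rewrite !fctE.
apply: (is_derive_eq h3).
rewrite fth_eq // !fctE /GRing.scale /= subr0 add0r.
field.
by rewrite !expf_neq0 ?gt_eqF.
Qed.

Lemma F_derive (R : realType) (N : nat) (t : R) : (3 <= N)%N -> odd N -> theta0 N < t ->
  is_derive t 1 (fun y : R => fine (eps_c N y)) (fth N t / t ^+ 2).
Proof.
move=> N3 oN ht.
apply: (near_eq_is_derive _ (Ef_derive N3 oN ht)).
near=> y.
rewrite eps_c_val //.
near: y; exact: lt_nbhsr.
Unshelve. all: by end_near. Qed.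

Lemma gfun_decr (R : realType) (N : nat) (a b : R) : (3 <= N)%N -> theta0 N < a -> a < b ->
  gfun N b < gfun N a.
Proof.
move=> N3 ha ab; have hb : theta0 N < b by apply: lt_trans ab.
have [a0 Xa] := theta_facts N3 ha; have [b0 Xb] := theta_facts N3 hb.
have [sa0 _] := sfun_facts N3 ha; have [sb0 _] := sfun_facts N3 hb.
have N0 : (0 < N)%N by apply: leq_trans N3.
have N1 : (0 < N.-1)%N by rewrite -ltnS prednK //; apply: leq_trans N3.
have h1 : (1 + a) ^+ N.-1 < (1 + b) ^+ N.-1.
  by rewrite ltr_pXn2r ?nnegrE //; lra.
have h2 : (1 + a) ^+ N < (1 + b) ^+ N.
  by rewrite ltr_pXn2r ?nnegrE //; lra.
have h3 : sfun N a < sfun N b.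
  apply: gt0_ltr_powR; rewrite ?invr_gt0 ?ltr0n ?nnegrE //; try lra.
have h4 : sfun N a ^+ N.-1 < sfun N b ^+ N.-1.
  by rewrite ltr_pXn2r ?nnegrE //; lra.
rewrite /gfun; lra.
Qed.

Lemma gfun_derivable (R : realType) (N : nat) (x : R) : (3 <= N)%N -> theta0 N < x ->
  derivable (gfun N) x 1.
Proof.
move=> N3 hx; have hs := sfun_derive N3 hx.
have h1 : is_derive x 1 (fun y : R => 1 + y) 1.
  by apply: is_derive_eq; rewrite add0r mulr1.
have hA := is_deriveX N.-1 h1.
have hB := is_deriveX N.-1 hs.
have hC := is_deriveB (is_deriveB (is_derive_cst (2 : R^o) x 1) hA) hB.
match type of hC with is_derive _ _ ?f _ => have -> : gfun N = f end.
  by apply/funext => y /=; rewrite !fctE.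
by case: hC.
Qed.

Lemma two_pow (R : realType) (N : nat) : (3 <= N)%N -> 8 <= (2 : R) ^+ N.
Proof.
move=> N3; apply: (@le_trans _ _ ((2 : R) ^+ 3)).
  by rewrite -natrX.
by rewrite ler_eXn2l // ltr1n.
Qed.

Lemma exists_ts (R : realType) (N : nat) : (3 <= N)%N -> odd N ->
  exists ts : R, theta0 N < ts /\ gfun N ts = 0.
Proof.
move=> N3 oN; have N0 : (0 < N)%N by apply: leq_trans N3.
have N1 : (0 < N.-1)%N by rewrite -ltnS prednK //; apply: leq_trans N3.
set p : R := 2 `^ N%:R^-1.
have p0 : 0 <= p by exact: powR_ge0.
have pN : p ^+ N = 2 by rewrite powK.
have p1 : 1 < p.
  by rewrite -(ltr_pXn2r N0) ?nnegrE // expr1n pN ltr1n.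
have h8 := two_pow R N3.
have p2 : p < 2.
  by rewrite -(ltr_pXn2r N0) ?nnegrE // pN; lra.
have th0 : theta0 N = p - 1 by [].
set d : R := 2 * (p - 1).
have d0 : 0 < d by rewrite /d; lra.
set sg : R := d / (d + 8).
have sg0 : 0 < sg by rewrite /sg divr_gt0 //; lra.
have sg1 : sg < 1 by rewrite /sg ltr_pdivrMr; lra.
have sg3 : 3 * sg < d.
  rewrite /sg mulrA ltr_pdivrMr; [nra | lra].
have sgN : sg ^+ N <= sg.
  rewrite -(prednK N0) exprS ler_piMr ?exprn_ile1 //; lra.
have sgN1 : sg ^+ N.-1 <= sg.
  rewrite -(prednK N1) exprS ler_piMr ?exprn_ile1 //; lra.
have sgN0 : 0 <= sg ^+ N by rewrite exprn_ge0 // ltW.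
set u : R := (2 + sg ^+ N) `^ N%:R^-1.
have u0 : 0 <= u by exact: powR_ge0.
have uN : u ^+ N = 2 + sg ^+ N by rewrite powK //; lra.
have up : p < u.
  have hsg : 0 < sg ^+ N by apply: exprn_gt0.
  by rewrite -(ltr_pXn2r N0) ?nnegrE // pN uN; lra.
have u2 : u < 2.
  rewrite ltNge; apply/negP => h.
  have : (2 : R) ^+ N <= u ^+ N by rewrite ler_pXn2r ?nnegrE //.
  lra.
set a := u - 1.
have ha : theta0 N < a.
  rewrite /a; lra.
have hb : theta0 N < (1:R) by lra.
have ua : 1 + a = u by rewrite /a addrCA subrr addr0.
have sa : sfun N a = sg.
  by rewrite /sfun ua uN (addrC 2) addrK powK2 // ltW.
have ga : 0 < gfun N a.
  rewrite /gfun sa ua.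
  have eu : u ^+ N = u * u ^+ N.-1 by rewrite -exprS prednK.
  have hu : 0 < u by lra.
  have hv : 0 <= sg ^+ N.-1 by rewrite exprn_ge0 // ltW.
  rewrite -(pmulr_rgt0 _ hu) !mulrBr -eu uN.
  have : 0 <= (2 - u) * sg ^+ N.-1 by apply: mulr_ge0; lra.
  move=> h; have : u * sg ^+ N.-1 <= 2 * sg by lra.
  have dE : d = 2 * (p - 1) by [].
  lra.
have g1 : gfun N (1:R) < 0.
  have [s0 _] := sfun_facts N3 hb.
  rewrite /gfun.
  have : 0 < sfun N (1:R) ^+ N.-1 by apply: exprn_gt0.
  have : 4 <= (1 + 1 : R) ^+ N.-1.
    apply: (@le_trans _ _ ((2 : R) ^+ 2)); first by rewrite -natrX.
    by rewrite ler_eXn2l ?ltr1n // -ltnS prednK.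
  lra.
have a1 : a <= 1 by rewrite /a; lra.
have cont : {within `[a, 1], continuous gfun N}.
  apply: derivable_within_continuous => x; rewrite in_itv /= => /andP[xa _].
  by apply: gfun_derivable => //; apply: lt_le_trans xa.
have hv : Num.min (gfun N a) (gfun N 1) <= 0 <= Num.max (gfun N a) (gfun N 1).
  by rewrite ge_min le_max; apply/andP; split; apply/orP; [right|left]; lra.
have [c cin gc] := IVT a1 cont hv.
exists c; split => //.
by move: cin; rewrite in_itv /= => /andP[ca _]; apply: lt_le_trans ca.
Qed.

Lemma df_sign (R : realType) (N : nat) (t : R) : (3 <= N)%N -> odd N -> theta0 N < t ->
  (0 < fth N t / t ^+ 2) = (0 < gfun N t) /\ (fth N t / t ^+ 2 < 0) = (gfun N t < 0).
Proof.
move=> N3 oN ht; have [t0 X0] := theta_facts N3 ht.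
have [s0 sN] := sfun_facts N3 ht.
have hS : 0 < sfun N t ^+ N.-1 by apply: exprn_gt0.
have hT : 0 < t ^+ 2 by apply: exprn_gt0.
rewrite fth_g //; split.
  by rewrite pmulr_lgt0 ?invr_gt0 // pmulr_lgt0 ?invr_gt0.
by rewrite pmulr_llt0 ?invr_gt0 // pmulr_llt0 ?invr_gt0.
Qed.

Lemma F_mono (R : realType) (N : nat) (s t : R) : (3 <= N)%N -> odd N -> theta0 N < s -> s < t ->
  exists2 c, s < c < t & Ef N t - Ef N s = fth N c / c ^+ 2 * (t - s).
Proof.
move=> N3 oN hs st.
have hder : forall x, x \in `]s, t[ -> is_derive x 1 (fun y : R => fine (eps_c N y)) (fth N x / x ^+ 2).
  move=> x; rewrite in_itv /= => /andP[sx _].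
  by apply: F_derive => //; apply: lt_trans sx.
have cont : {within `[s, t], continuous (fun y : R => fine (eps_c N y))}.
  apply: derivable_within_continuous => x; rewrite in_itv /= => /andP[sx _].
  have hx : theta0 N < x by apply: lt_le_trans sx.
  by case: (F_derive N3 oN hx).
have [c cin hc] := MVT st hder cont.
exists c; first by move: cin; rewrite in_itv.
move: hc; rewrite !eps_c_val //; last by apply: lt_trans st.
Qed.

Unset Implicit Arguments.

Theorem lemma3 (R : realType) (N : nat) (hN3 : (3 <= N)%N) (hNodd : odd N) :
  (* eps_c is finite and differentiable on (theta0, +oo) with derivative f/theta^2 *)
  (forall theta : R, theta0 N < theta ->
     eps_c N theta \is a fin_num /\
     is_derive theta 1 (fun t : R => fine (eps_c N t)) (fth N theta / theta ^+ 2)) /\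
  (* unique stationary point, a maximum; increasing before, decreasing after *)
  (exists ts : R,
     theta0 N < ts /\
     [/\ derive1 (fun t : R => fine (eps_c N t)) ts = 0,
         (forall t : R, theta0 N < t -> derive1 (fun u : R => fine (eps_c N u)) t = 0 -> t = ts),
         (forall t : R, theta0 N < t -> (eps_c N t <= eps_c N ts)%E),
         (forall s t : R, theta0 N < s -> s < t -> t <= ts -> (eps_c N s < eps_c N t)%E)
       & (forall s t : R, ts <= s -> s < t -> (eps_c N t < eps_c N s)%E)]).
Proof.
split.
  by move=> t ht; split; [rewrite eps_c_val | exact: F_derive].
have [ts [hts g0]] := exists_ts R hN3 hNodd.
have dF : forall t : R, theta0 N < t ->
    derive1 (fun u : R => fine (eps_c N u)) t = fth N t / t ^+ 2.
  by move=> t ht; rewrite derive1E; case: (F_derive hN3 hNodd ht).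
have inc : forall s t : R, theta0 N < s -> s < t -> t <= ts -> (eps_c N s < eps_c N t)%E.
  move=> s t hs st tts; have ht : theta0 N < t by apply: lt_trans st.
  rewrite !eps_c_val // lte_fin -subr_gt0.
  have [c /andP[sc ct] ->] := F_mono hN3 hNodd hs st.
  have hc : theta0 N < c by apply: lt_trans sc.
  apply: mulr_gt0; last by rewrite subr_gt0.
  have [-> _] := df_sign hN3 hNodd hc.
  by rewrite -g0; apply: gfun_decr => //; apply: lt_le_trans tts.
have dec : forall s t : R, ts <= s -> s < t -> (eps_c N t < eps_c N s)%E.
  move=> s t tss st; have hs : theta0 N < s by apply: lt_le_trans tss.
  have ht : theta0 N < t by apply: lt_trans st.
  rewrite !eps_c_val // lte_fin -subr_lt0.
  have [c /andP[sc ct] ->] := F_mono hN3 hNodd hs st.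
  have hc : theta0 N < c by apply: lt_trans sc.
  rewrite pmulr_llt0 ?subr_gt0 //.
  have [_ ->] := df_sign hN3 hNodd hc.
  by rewrite -g0; apply: gfun_decr => //; apply: le_lt_trans sc.
exists ts; split => //; split => //.
- by rewrite dF // fth_g // g0 !mul0r.
- move=> t ht; rewrite dF // fth_g //.
  have [s0 _] := sfun_facts hN3 ht; have [t0 _] := theta_facts hN3 ht.
  move/eqP; rewrite !mulf_eq0 !invr_eq0 !expf_eq0 (gt_eqF t0) (gt_eqF s0) !andbF !orbF.
  move/eqP => gt0.
  case: (ltgtP t ts) => // [tlt|tgt].
    by have := gfun_decr hN3 ht tlt; rewrite gt0 g0 ltxx.
  by have := gfun_decr hN3 hts tgt; rewrite gt0 g0 ltxx.
- move=> t ht; case: (ltgtP t ts) => [tlt|tgt|->//].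
    by apply: ltW; apply: inc.
  by apply: ltW; apply: dec.
Qed.
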